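(* Let $R = M_2(\mathbb{F}_2)$ be the ring of $2\times 2$ matrices over the field with two elements (a non-commutative ring with unity of order $16$ having exactly $10$ zero-divisors, counting $0$). Consider the (left) projective line $P(R)$. Then: (i) $P(R)$ has exactly $35$ points; (ii) exactly $26$ of these points have a representative pair $(a,b)$ in which $a$ or $b$ is a unit of $R$; (iii) every point of $P(R)$ has exactly $18$ neighbours other than itself; (iv) any two distant points of $P(R)$ have exactly $9$ common neighbours; (v) any three pairwise distant points of $P(R)$ have exactly $3$ common neighbours; (vi) the maximum cardinality of a set of pairwise distant points of $P(R)$ is $5$. *)

(* Defs.v *)
From mathcomp Require Import all_boot all_order all_algebra.
Set Implicit Arguments. Unset Strict Implicit. Unset Printing Implicit Defensive.
Import GRing.Theory.
Local Open Scope ring_scope.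

Section ProjLine.
Variable R : finNzRingType.

Definition mx2 (a b c d : R) : 'M[R]_2 :=
  \matrix_(i < 2, j < 2)
    if i == 0 :> nat then (if j == 0 :> nat then a else b)
    else (if j == 0 :> nat then c else d).

Definition invertible2 (a b c d : R) : bool :=
  [exists B : 'M[R]_2, (mx2 a b c d *m B == 1%:M) && (B *m mx2 a b c d == 1%:M)].

Definition admissible (p : R * R) : bool :=
  [exists c : R, [exists d : R, invertible2 p.1 p.2 c d]].

Definition gen (p : R * R) : {set R * R} :=
  [set (r * p.1, r * p.2) | r : R].

Definition projLine : {set {set R * R}} :=
  [set gen p | p in [set p : R * R | admissible p]].

Definition represents (p : R * R) (X : {set R * R}) : bool :=
  (X == gen p).

Definition distant (X Y : {set R * R}) : bool :=
  [exists p : R * R, [exists q : R * R,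
     [&& represents p X, represents q Y & invertible2 p.1 p.2 q.1 q.2]]].

Definition neighbour (X Y : {set R * R}) : bool := ~~ distant X Y.

Definition pairwise_distant (S : {set {set R * R}}) : bool :=
  [forall X in S, forall Y in S, (X != Y) ==> distant X Y].

End ProjLine.

Definition M2F2 : finNzRingType := 'M['F_2]_2.

(* Main.v *)
Require Import Defs.
From mathcomp Require Import all_boot all_order all_algebra.
Set Implicit Arguments. Unset Strict Implicit. Unset Printing Implicit Defensive.
Import GRing.Theory.
Local Open Scope ring_scope.


Lemma F2cases (x : 'F_2) : x = 0 \/ x = 1.
Proof. case: x => [[|[|n]] Hn]; [left|right|]; try exact: val_inj. by []. Qed.
Lemma F2_11 : (1 + 1 : 'F_2) = 0.
Proof. exact: val_inj. Qed.
Lemma F2_10 : (1 : 'F_2) != 0.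
Proof. exact: oner_neq0. Qed.

Definition b2F (b : bool) : 'F_2 := if b then 1 else 0.
Lemma b2FM a b : b2F (a && b) = b2F a * b2F b.
Proof. by case: a; case: b; rewrite /= ?mulr0 ?mulr1. Qed.
Lemma b2FD a b : b2F (xorb a b) = b2F a + b2F b.
Proof. by case: a; case: b; rewrite /= ?addr0 ?add0r ?F2_11. Qed.
Lemma b2F_inj : injective b2F.
Proof. by case; case => //= H; move: F2_10; rewrite ?H eqxx. Qed.
Lemma b2F_surj (x : 'F_2) : x = b2F (x != 0).
Proof. by case: (F2cases x) => ->; rewrite ?eqxx //= (negbTE F2_10). Qed.

Section MX2.
Variable R : finNzRingType.
Lemma mx2E (a b c d : R) i j : mx2 a b c d i j =
  if i == 0 :> nat then (if j == 0 :> nat then a else b)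
    else (if j == 0 :> nat then c else d).
Proof. by rewrite mxE. Qed.
Lemma mx2_mul (a b c d e f g h : R) :
  mx2 a b c d *m mx2 e f g h = mx2 (a*e+b*g) (a*f+b*h) (c*e+d*g) (c*f+d*h).
Proof.
apply/matrixP => i j; rewrite !mxE big_ord_recr big_ord1 !mxE /=.
by case: i => [[|[|]] ?] //; case: j => [[|[|]] ?].
Qed.
Lemma mx2_eta (M : 'M[R]_2) : M = mx2 (M 0 0) (M 0 1) (M 1 0) (M 1 1).
Proof.
apply/matrixP => i j; rewrite !mxE.
case: i => [[|[|]] ?] //; case: j => [[|[|]] ?] //=; congr (M _ _); exact: val_inj.
Qed.
Lemma mx2_1 : (1%:M : 'M[R]_2) = mx2 1 0 0 1.
Proof.
apply/matrixP => i j; rewrite !mxE.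
by case: i => [[|[|]] ?] //; case: j => [[|[|]] ?].
Qed.
Lemma mx2_0 : (0 : 'M[R]_2) = mx2 0 0 0 0.
Proof.
apply/matrixP => i j; rewrite !mxE.
by case: i => [[|[|]] ?] //; case: j => [[|[|]] ?].
Qed.
Lemma mx2_inj a b c d a' b' c' d' : mx2 a b c d = mx2 a' b' c' d' :> 'M[R]_2 ->
  [/\ a = a', b = b', c = c' & d = d'].
Proof.
move=> H; have E i j := congr1 (fun M : 'M[R]_2 => M i j) H.
move: (E 0 0) (E 0 1) (E 1 0) (E 1 1); rewrite !mxE /=. done.
Qed.
End MX2.

Definition C := ((bool * bool) * (bool * bool))%type.
Local Notation R := 'M['F_2]_2.
Definition dec (c : C) : R :=
  mx2 (b2F c.1.1) (b2F c.1.2) (b2F c.2.1) (b2F c.2.2).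
Definition mulC (x y : C) : C :=
  let: ((a,b),(c,d)) := x in let: ((e,f),(g,h)) := y in
  ((xorb (a&&e) (b&&g), xorb (a&&f) (b&&h)), (xorb (c&&e) (d&&g), xorb (c&&f) (d&&h))).
Definition addC (x y : C) : C :=
  let: ((a,b),(c,d)) := x in let: ((e,f),(g,h)) := y in
  ((xorb a e, xorb b f), (xorb c g, xorb d h)).
Definition zeroC : C := ((false,false),(false,false)).
Definition oneC : C := ((true,false),(false,true)).

Lemma decM x y : dec (mulC x y) = dec x * dec y.
Proof.
case: x => [[a b] [c d]]; case: y => [[e f] [g h]].
by rewrite /dec /= -mulmxE mx2_mul !b2FD !b2FM.
Qed.
Lemma decD x y : dec (addC x y) = dec x + dec y.
Proof.
case: x => [[a b] [c d]]; case: y => [[e f] [g h]].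
rewrite /dec /= !b2FD; apply/matrixP => i j; rewrite !mxE.
by case: i => [[|[|]] ?] //; case: j => [[|[|]] ?].
Qed.
Lemma dec0 : dec zeroC = 0.
Proof. by rewrite /dec /= mx2_0. Qed.
Lemma dec1 : dec oneC = 1.
Proof. by rewrite /dec /= [1 : R]mx2_1. Qed.
Lemma dec_inj : injective dec.
Proof.
case=> [[a b] [c d]] [[e f] [g h]] /mx2_inj [] /=.
by move=> /b2F_inj-> /b2F_inj-> /b2F_inj-> /b2F_inj->.
Qed.
Definition enc (M : R) : C := ((M 0 0 != 0, M 0 1 != 0), (M 1 0 != 0, M 1 1 != 0)).
Lemma encK M : dec (enc M) = M.
Proof. by rewrite /dec /= -!b2F_surj -mx2_eta. Qed.

Definition allB := [:: true; false].
Definition allB2 := [seq (a,b) | a <- allB, b <- allB].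
Definition allC : seq C := [seq (x,y) | x <- allB2, y <- allB2].
Lemma allC_all x : x \in allC.
Proof. by case: x => [[[] []] [[] []]]. Qed.
Definition allCC : seq (C * C) := [seq (x,y) | x <- allC, y <- allC].
Lemma allCC_all x : x \in allCC.
Proof. case: x => x y; apply/allpairsP; exists (x,y); rewrite !allC_all. by []. Qed.

Lemma existsR (P : R -> Prop) : (exists r : R, P r) <-> (exists c : C, P (dec c)).
Proof. split=> [[r Pr]|[c Pc]]; last by exists (dec c). by exists (enc r); rewrite encK. Qed.

Definition decp (c : C * C) : R * R := (dec c.1, dec c.2).
Definition encp (p : R * R) : C * C := (enc p.1, enc p.2).
Lemma encpK p : decp (encp p) = p.
Proof. by case: p => a b; rewrite /decp /= !encK. Qed.
Lemma decp_inj : injective decp.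
Proof. by case=> a b [c d] [] /dec_inj -> /dec_inj ->. Qed.

Section Generic.
Variable T : finNzRingType.
Lemma genP (p z : T * T) : reflect (exists r : T, z = (r * p.1, r * p.2)) (z \in gen p).
Proof.
apply: (iffP imsetP) => [[r _ ->]|[r ->]]; by exists r.
Qed.
Lemma gen_self (p : T * T) : p \in gen p.
Proof. by apply/genP; exists 1; rewrite !mul1r; case: p. Qed.
Lemma gen_sub (p q : T * T) : p \in gen q -> gen p \subset gen q.
Proof.
move=> /genP [r ->]; apply/subsetP => z /genP [s ->] /=.
by apply/genP; exists (s * r); rewrite !mulrA.
Qed.
Lemma gen_eqE (p q : T * T) : (gen p == gen q) = (p \in gen q) && (q \in gen p).
Proof.
apply/eqP/andP => [E|[H1 H2]].
  by rewrite -E gen_self; split => //; rewrite E gen_self.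
by apply/eqP; rewrite eqEsubset !gen_sub.
Qed.

Lemma inv2_entries (a b c d : T) : invertible2 a b c d ->
  exists e f g h : T, [/\ a*e+b*g = 1, a*f+b*h = 0, c*e+d*g = 0 & c*f+d*h = 1].
Proof.
move=> /existsP [B /andP [/eqP H _]].
move: H; rewrite [B]mx2_eta mx2_mul mx2_1 => /mx2_inj [? ? ? ?].
by exists (B 0 0), (B 0 1), (B 1 0), (B 1 1).
Qed.

Lemma annih_not_adm (a b r : T) : r != 0 -> r * a = 0 -> r * b = 0 ->
  ~~ admissible (a, b).
Proof.
move=> r0 ra rb; apply/negP => /existsP [c /existsP [d /inv2_entries]].
move=> [e [f [g [h [E1 _ _ _]]]]] /=.
move: r0; rewrite -[r]mulr1 -E1 mulrDr !mulrA ra rb !mul0r addr0 eqxx.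
by [].
Qed.

Lemma distant_inter (X Y : {set T * T}) z : distant X Y -> z \in X -> z \in Y ->
  z = (0, 0).
Proof.
move=> /existsP [p /existsP [q /and3P [/eqP -> /eqP -> /inv2_entries]]].
move=> [e [f [g [h [E1 _ E3 _]]]]] /genP [u ->] /genP [v [Hu1 Hu2]].
have : u = 0.
  by rewrite -[u]mulr1 -E1 mulrDr !mulrA Hu1 Hu2 -!mulrA -mulrDr E3 mulr0.
by move=> ->; rewrite !mul0r.
Qed.

Lemma inv2_intro (a b c d e f g h : T) :
  [/\ a*e+b*g = 1, a*f+b*h = 0, c*e+d*g = 0 & c*f+d*h = 1] ->
  [/\ e*a+f*c = 1, e*b+f*d = 0, g*a+h*c = 0 & g*b+h*d = 1] ->
  invertible2 a b c d.
Proof.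
move=> [E1 E2 E3 E4] [F1 F2 F3 F4]; apply/existsP; exists (mx2 e f g h).
by rewrite !mx2_mul mx2_1 E1 E2 E3 E4 F1 F2 F3 F4 !eqxx.
Qed.
End Generic.

Definition genL (p : C * C) : seq (C * C) := [seq (mulC r p.1, mulC r p.2) | r <- allC].
Definition memC (q p : C * C) : bool := q \in genL p.
Lemma memCE p q : (decp q \in gen (decp p)) = memC q p.
Proof.
apply/genP/mapP => [[r [E1 E2]]|[r _ E]].
  exists (enc r); first exact: allC_all.
  move: E1 E2; case: q => q1 q2 E1 E2; congr pair; apply: dec_inj; by rewrite decM encK ?E1 ?E2.
by exists (dec r); rewrite E /decp /=; congr pair; apply: decM.
Qed.
Definition genEqC (p q : C * C) := memC p q && memC q p.
Lemma genEqCE p q : (gen (decp p) == gen (decp q)) = genEqC p q.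
Proof. by rewrite gen_eqE !memCE. Qed.

Definition unitC (x : C) := has (fun y => (mulC y x == oneC) && (mulC x y == oneC)) allC.
Lemma unitCE x : (dec x \is a GRing.unit) = unitC x.
Proof.
apply/unitrP/hasP => [[y [E1 E2]]|[y _ /andP [/eqP E1 /eqP E2]]].
  exists (enc y); first exact: allC_all.
  by apply/andP; split; apply/eqP/dec_inj; rewrite decM encK dec1.
by exists (dec y); rewrite -!decM E1 E2 dec1.
Qed.

Definition inv2C (a b c d e f g h : C) : bool :=
  [&& addC (mulC a e) (mulC b g) == oneC, addC (mulC a f) (mulC b h) == zeroC,
      addC (mulC c e) (mulC d g) == zeroC & addC (mulC c f) (mulC d h) == oneC] &&
  [&& addC (mulC e a) (mulC f c) == oneC, addC (mulC e b) (mulC f d) == zeroC,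
      addC (mulC g a) (mulC h c) == zeroC & addC (mulC g b) (mulC h d) == oneC].
Lemma inv2CP a b c d e f g h : inv2C a b c d e f g h ->
  invertible2 (dec a) (dec b) (dec c) (dec d).
Proof.
case/andP => /and4P [/eqP E1 /eqP E2 /eqP E3 /eqP E4] /and4P [/eqP F1 /eqP F2 /eqP F3 /eqP F4].
apply: (@inv2_intro _ _ _ _ _ (dec e) (dec f) (dec g) (dec h));
by rewrite -!decM -!decD ?E1 ?E2 ?E3 ?E4 ?F1 ?F2 ?F3 ?F4 ?dec0 ?dec1.
Qed.

Definition Lnat : seq (nat*nat) := [:: (0,6); (1,4); (1,6); (1,8); (1,9); (1,12); (1,13); (2,4); (2,6); (2,8); (2,9); (2,12); (2,13); (3,4); (3,6); (3,8); (3,9); (3,12); (3,13); (6,0); (6,1); (6,2); (6,3); (6,4); (6,5); (6,6); (6,7); (6,8); (6,9); (6,10); (6,11); (6,12); (6,13); (6,14); (6,15)].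
Definition AWnat : seq ((nat*nat)*(nat*nat*nat*nat*nat*nat)) := [:: ((0,6),(6,0,0,6,6,0)); ((0,7),(6,0,0,6,14,0)); ((0,9),(6,0,0,6,9,0)); ((0,11),(6,0,0,6,11,0)); ((0,13),(6,0,0,6,13,0)); ((0,14),(6,0,0,6,7,0)); ((1,4),(2,8,1,4,2,8)); ((1,5),(2,8,3,4,2,8)); ((1,6),(2,8,1,6,2,8)); ((1,7),(2,8,3,6,2,8)); ((1,8),(2,4,1,4,8,2)); ((1,9),(2,4,1,6,8,2)); ((1,10),(2,4,3,4,8,2)); ((1,11),(2,4,3,6,8,2)); ((1,12),(2,4,1,4,8,10)); ((1,13),(2,4,1,6,8,10)); ((1,14),(2,4,3,6,8,10)); ((1,15),(2,4,3,4,8,10)); ((2,4),(1,8,4,1,2,8)); ((2,5),(1,8,12,1,2,8)); ((2,6),(1,8,4,9,2,8)); ((2,7),(1,8,12,9,2,8)); ((2,8),(1,4,4,1,8,2)); ((2,9),(1,4,4,9,8,2)); ((2,10),(1,4,12,1,8,2)); ((2,11),(1,4,12,9,8,2)); ((2,12),(1,4,4,1,8,10)); ((2,13),(1,4,4,9,8,10)); ((2,14),(1,4,12,9,8,10)); ((2,15),(1,4,12,1,8,10)); ((3,4),(1,8,4,5,2,8)); ((3,5),(1,8,12,5,2,8)); ((3,6),(1,8,4,13,2,8)); ((3,7),(1,8,12,13,2,8)); ((3,8),(1,4,4,5,8,2)); ((3,9),(1,4,4,13,8,2)); ((3,10),(1,4,12,5,8,2)); ((3,11),(1,4,12,13,8,2));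 ((3,12),(1,4,4,5,8,10)); ((3,13),(1,4,4,13,8,10)); ((3,14),(1,4,12,13,8,10)); ((3,15),(1,4,12,5,8,10)); ((4,1),(2,8,2,4,1,8)); ((4,2),(2,4,2,4,4,2)); ((4,3),(2,4,2,4,4,10)); ((4,5),(2,8,3,4,1,8)); ((4,6),(2,4,2,6,4,2)); ((4,7),(2,4,2,6,4,10)); ((4,9),(2,8,2,6,1,8)); ((4,10),(2,4,3,4,4,2)); ((4,11),(2,4,3,6,4,10)); ((4,13),(2,8,3,6,1,8)); ((4,14),(2,4,3,6,4,2)); ((4,15),(2,4,3,4,4,10)); ((5,1),(2,8,2,4,3,8)); ((5,2),(2,4,2,4,12,2)); ((5,3),(2,4,2,4,12,10)); ((5,4),(2,8,1,4,3,8)); ((5,6),(2,4,2,6,12,10)); ((5,7),(2,4,2,6,12,2)); ((5,8),(2,4,1,4,12,2)); ((5,9),(2,4,1,6,12,10)); ((5,11),(2,8,2,6,3,8)); ((5,12),(2,4,1,4,12,10)); ((5,13),(2,4,1,6,12,2)); ((5,14),(2,8,1,6,3,8)); ((6,0),(0,6,6,0,0,6)); ((6,1),(0,6,6,8,0,6)); ((6,2),(0,6,6,4,0,6)); ((6,3),(0,6,6,12,0,6)); ((6,4),(0,6,6,2,0,6)); ((6,5),(0,6,6,10,0,6)); ((6,6),(0,6,6,6,0,6)); ((6,7),(0,6,6,14,0,6)); ((6,8),(0,6,6,1,0,6)); ((6,9),(0,6,6,9,0,6)); ((6,10),(0,6,6,5,0,6)); ((6,11),(0,6,6,13,0,6));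 ((6,12),(0,6,6,3,0,6)); ((6,13),(0,6,6,11,0,6)); ((6,14),(0,6,6,7,0,6)); ((6,15),(0,6,6,15,0,6)); ((7,0),(0,6,14,0,0,6)); ((7,1),(0,6,14,8,0,6)); ((7,2),(0,6,14,4,0,6)); ((7,3),(0,6,14,12,0,6)); ((7,4),(0,6,14,10,0,6)); ((7,5),(0,6,14,2,0,6)); ((7,6),(0,6,14,14,0,6)); ((7,7),(0,6,14,6,0,6)); ((7,8),(0,6,14,5,0,6)); ((7,9),(0,6,14,13,0,6)); ((7,10),(0,6,14,1,0,6)); ((7,11),(0,6,14,9,0,6)); ((7,12),(0,6,14,15,0,6)); ((7,13),(0,6,14,7,0,6)); ((7,14),(0,6,14,11,0,6)); ((7,15),(0,6,14,3,0,6)); ((8,1),(1,8,8,1,1,8)); ((8,2),(1,4,8,1,4,2)); ((8,3),(1,4,8,1,4,10)); ((8,5),(1,8,12,1,1,8)); ((8,6),(1,4,8,9,4,2)); ((8,7),(1,4,8,9,4,10)); ((8,9),(1,8,8,9,1,8)); ((8,10),(1,4,12,1,4,2)); ((8,11),(1,4,12,9,4,10)); ((8,13),(1,8,12,9,1,8)); ((8,14),(1,4,12,9,4,2)); ((8,15),(1,4,12,1,4,10)); ((9,0),(0,6,9,0,0,6)); ((9,1),(0,6,9,2,0,6)); ((9,2),(0,6,9,1,0,6)); ((9,3),(0,6,9,3,0,6)); ((9,4),(0,6,9,8,0,6)); ((9,5),(0,6,9,10,0,6)); ((9,6),(0,6,9,9,0,6)); ((9,7),(0,6,9,11,0,6));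 ((9,8),(0,6,9,4,0,6)); ((9,9),(0,6,9,6,0,6)); ((9,10),(0,6,9,5,0,6)); ((9,11),(0,6,9,7,0,6)); ((9,12),(0,6,9,12,0,6)); ((9,13),(0,6,9,14,0,6)); ((9,14),(0,6,9,13,0,6)); ((9,15),(0,6,9,15,0,6)); ((10,1),(1,8,8,1,3,8)); ((10,2),(1,4,8,1,12,2)); ((10,3),(1,4,8,1,12,10)); ((10,4),(1,8,4,1,3,8)); ((10,6),(1,4,8,9,12,10)); ((10,7),(1,4,8,9,12,2)); ((10,8),(1,4,4,1,12,2)); ((10,9),(1,4,4,9,12,10)); ((10,11),(1,8,8,9,3,8)); ((10,12),(1,4,4,1,12,10)); ((10,13),(1,4,4,9,12,2)); ((10,14),(1,8,4,9,3,8)); ((11,0),(0,6,11,0,0,6)); ((11,1),(0,6,11,2,0,6)); ((11,2),(0,6,11,1,0,6)); ((11,3),(0,6,11,3,0,6)); ((11,4),(0,6,11,10,0,6)); ((11,5),(0,6,11,8,0,6)); ((11,6),(0,6,11,11,0,6)); ((11,7),(0,6,11,9,0,6)); ((11,8),(0,6,11,5,0,6)); ((11,9),(0,6,11,7,0,6)); ((11,10),(0,6,11,4,0,6)); ((11,11),(0,6,11,6,0,6)); ((11,12),(0,6,11,15,0,6)); ((11,13),(0,6,11,13,0,6)); ((11,14),(0,6,11,14,0,6)); ((11,15),(0,6,11,12,0,6)); ((12,1),(1,8,8,5,1,8)); ((12,2),(1,4,8,5,4,2)); ((12,3),(1,4,8,5,4,10)); ((12,5),(1,8,12,5,1,8));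 ((12,6),(1,4,8,13,4,2)); ((12,7),(1,4,8,13,4,10)); ((12,9),(1,8,8,13,1,8)); ((12,10),(1,4,12,5,4,2)); ((12,11),(1,4,12,13,4,10)); ((12,13),(1,8,12,13,1,8)); ((12,14),(1,4,12,13,4,2)); ((12,15),(1,4,12,5,4,10)); ((13,0),(0,6,13,0,0,6)); ((13,1),(0,6,13,10,0,6)); ((13,2),(0,6,13,5,0,6)); ((13,3),(0,6,13,15,0,6)); ((13,4),(0,6,13,8,0,6)); ((13,5),(0,6,13,2,0,6)); ((13,6),(0,6,13,13,0,6)); ((13,7),(0,6,13,7,0,6)); ((13,8),(0,6,13,4,0,6)); ((13,9),(0,6,13,14,0,6)); ((13,10),(0,6,13,1,0,6)); ((13,11),(0,6,13,11,0,6)); ((13,12),(0,6,13,12,0,6)); ((13,13),(0,6,13,6,0,6)); ((13,14),(0,6,13,9,0,6)); ((13,15),(0,6,13,3,0,6)); ((14,0),(0,6,7,0,0,6)); ((14,1),(0,6,7,10,0,6)); ((14,2),(0,6,7,5,0,6)); ((14,3),(0,6,7,15,0,6)); ((14,4),(0,6,7,2,0,6)); ((14,5),(0,6,7,8,0,6)); ((14,6),(0,6,7,7,0,6)); ((14,7),(0,6,7,13,0,6)); ((14,8),(0,6,7,1,0,6)); ((14,9),(0,6,7,11,0,6)); ((14,10),(0,6,7,4,0,6)); ((14,11),(0,6,7,14,0,6)); ((14,12),(0,6,7,3,0,6)); ((14,13),(0,6,7,9,0,6)); ((14,14),(0,6,7,6,0,6)); ((14,15),(0,6,7,12,0,6));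 ((15,1),(1,8,8,5,3,8)); ((15,2),(1,4,8,5,12,2)); ((15,3),(1,4,8,5,12,10)); ((15,4),(1,8,4,5,3,8)); ((15,6),(1,4,8,13,12,10)); ((15,7),(1,4,8,13,12,2)); ((15,8),(1,4,4,5,12,2)); ((15,9),(1,4,4,13,12,10)); ((15,11),(1,8,8,13,3,8)); ((15,12),(1,4,4,5,12,10)); ((15,13),(1,4,4,13,12,2)); ((15,14),(1,8,4,13,3,8))].
Definition DWnat : seq ((nat*nat)*((nat*nat)*(nat*nat)*(nat*nat*nat*nat))) := [:: ((0,19),((0,6),(6,0),(0,6,6,0))); ((0,20),((0,6),(6,1),(8,6,6,0))); ((0,21),((0,6),(6,2),(4,6,6,0))); ((0,22),((0,6),(6,3),(12,6,6,0))); ((0,23),((0,6),(6,4),(2,6,6,0))); ((0,24),((0,6),(6,5),(10,6,6,0))); ((0,25),((0,6),(6,6),(6,6,6,0))); ((0,26),((0,6),(6,7),(14,6,6,0))); ((0,27),((0,6),(6,8),(1,6,6,0))); ((0,28),((0,6),(6,9),(9,6,6,0))); ((0,29),((0,6),(6,10),(5,6,6,0))); ((0,30),((0,6),(6,11),(13,6,6,0))); ((0,31),((0,6),(6,12),(3,6,6,0))); ((0,32),((0,6),(6,13),(11,6,6,0))); ((0,33),((0,6),(6,14),(7,6,6,0))); ((0,34),((0,6),(6,15),(15,6,6,0))); ((1,9),((1,4),(2,8),(1,4,2,8))); ((1,10),((1,4),(2,9),(9,4,2,8))); ((1,11),((1,4),(2,12),(1,4,10,8))); ((1,12),((1,4),(2,13),(9,4,10,8)));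 ((1,15),((1,4),(3,8),(5,4,2,8))); ((1,16),((1,4),(3,9),(13,4,2,8))); ((1,17),((1,4),(3,12),(5,4,10,8))); ((1,18),((1,4),(3,13),(13,4,10,8))); ((1,27),((1,4),(6,8),(1,4,6,8))); ((1,28),((1,4),(6,9),(9,4,6,8))); ((1,29),((1,4),(6,10),(5,12,6,8))); ((1,30),((1,4),(6,11),(13,12,6,8))); ((1,31),((1,4),(6,12),(1,4,14,8))); ((1,32),((1,4),(6,13),(9,4,14,8))); ((1,33),((1,4),(6,14),(13,12,14,8))); ((1,34),((1,4),(6,15),(5,12,14,8))); ((2,9),((1,6),(2,8),(1,6,2,8))); ((2,10),((1,6),(2,9),(9,6,2,8))); ((2,11),((1,6),(2,12),(3,6,10,8))); ((2,12),((1,6),(2,13),(11,6,10,8))); ((2,15),((1,6),(3,8),(5,14,2,8))); ((2,16),((1,6),(3,9),(13,14,2,8))); ((2,17),((1,6),(3,12),(15,14,10,8))); ((2,18),((1,6),(3,13),(7,14,10,8))); ((2,19),((1,6),(6,0),(0,6,6,8))); ((2,20),((1,6),(6,1),(8,6,6,8))); ((2,21),((1,6),(6,2),(4,14,6,8))); ((2,22),((1,6),(6,3),(12,14,6,8))); ((2,23),((1,6),(6,4),(2,6,14,8))); ((2,24),((1,6),(6,5),(10,6,14,8))); ((2,25),((1,6),(6,6),(14,14,14,8))); ((2,26),((1,6),(6,7),(6,14,14,8))); ((3,7),((1,8),(2,4),(1,4,8,2))); ((3,8),((1,8),(2,6),(9,4,8,2))); ((3,11),((1,8),(2,12),(1,4,10,2)));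 ((3,12),((1,8),(2,13),(9,12,10,2))); ((3,13),((1,8),(3,4),(5,4,8,2))); ((3,14),((1,8),(3,6),(13,4,8,2))); ((3,17),((1,8),(3,12),(5,4,10,2))); ((3,18),((1,8),(3,13),(13,12,10,2))); ((3,23),((1,8),(6,4),(1,4,9,2))); ((3,24),((1,8),(6,5),(5,12,9,2))); ((3,25),((1,8),(6,6),(9,4,9,2))); ((3,26),((1,8),(6,7),(13,12,9,2))); ((3,31),((1,8),(6,12),(1,4,11,2))); ((3,32),((1,8),(6,13),(13,12,11,2))); ((3,33),((1,8),(6,14),(9,4,11,2))); ((3,34),((1,8),(6,15),(5,12,11,2))); ((4,7),((1,9),(2,4),(1,6,8,2))); ((4,8),((1,9),(2,6),(9,6,8,2))); ((4,11),((1,9),(2,12),(3,6,10,2))); ((4,12),((1,9),(2,13),(11,14,10,2))); ((4,13),((1,9),(3,4),(5,14,8,2))); ((4,14),((1,9),(3,6),(13,14,8,2))); ((4,17),((1,9),(3,12),(15,14,10,2))); ((4,18),((1,9),(3,13),(7,6,10,2))); ((4,19),((1,9),(6,0),(0,6,9,2))); ((4,20),((1,9),(6,1),(4,14,9,2))); ((4,21),((1,9),(6,2),(8,6,9,2))); ((4,22),((1,9),(6,3),(12,14,9,2))); ((4,27),((1,9),(6,8),(2,6,11,2))); ((4,28),((1,9),(6,9),(14,14,11,2))); ((4,29),((1,9),(6,10),(10,6,11,2))); ((4,30),((1,9),(6,11),(6,14,11,2))); ((5,7),((1,12),(2,4),(1,4,8,10))); ((5,8),((1,12),(2,6),(9,12,8,10)));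 ((5,9),((1,12),(2,8),(1,4,2,10))); ((5,10),((1,12),(2,9),(9,12,2,10))); ((5,13),((1,12),(3,4),(5,4,8,10))); ((5,14),((1,12),(3,6),(13,12,8,10))); ((5,15),((1,12),(3,8),(5,4,2,10))); ((5,16),((1,12),(3,9),(13,12,2,10))); ((5,23),((1,12),(6,4),(1,4,13,10))); ((5,24),((1,12),(6,5),(5,12,13,10))); ((5,25),((1,12),(6,6),(13,12,13,10))); ((5,26),((1,12),(6,7),(9,4,13,10))); ((5,27),((1,12),(6,8),(1,4,7,10))); ((5,28),((1,12),(6,9),(13,12,7,10))); ((5,29),((1,12),(6,10),(5,12,7,10))); ((5,30),((1,12),(6,11),(9,4,7,10))); ((6,7),((1,13),(2,4),(1,6,8,10))); ((6,8),((1,13),(2,6),(9,14,8,10))); ((6,9),((1,13),(2,8),(3,6,2,10))); ((6,10),((1,13),(2,9),(11,14,2,10))); ((6,13),((1,13),(3,4),(5,14,8,10))); ((6,14),((1,13),(3,6),(13,6,8,10))); ((6,15),((1,13),(3,8),(15,14,2,10))); ((6,16),((1,13),(3,9),(7,6,2,10))); ((6,19),((1,13),(6,0),(0,6,13,10))); ((6,20),((1,13),(6,1),(4,14,13,10))); ((6,21),((1,13),(6,2),(12,14,13,10))); ((6,22),((1,13),(6,3),(8,6,13,10))); ((6,31),((1,13),(6,12),(2,6,7,10))); ((6,32),((1,13),(6,13),(14,14,7,10))); ((6,33),((1,13),(6,14),(6,14,7,10))); ((6,34),((1,13),(6,15),(10,6,7,10))); ((7,3),((2,4),(1,8),(4,1,2,8)));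 ((7,4),((2,4),(1,9),(6,1,2,8))); ((7,5),((2,4),(1,12),(4,1,10,8))); ((7,6),((2,4),(1,13),(6,1,10,8))); ((7,15),((2,4),(3,8),(5,1,2,8))); ((7,16),((2,4),(3,9),(7,1,2,8))); ((7,17),((2,4),(3,12),(5,1,10,8))); ((7,18),((2,4),(3,13),(7,1,10,8))); ((7,21),((2,4),(6,2),(4,2,6,4))); ((7,22),((2,4),(6,3),(4,2,14,4))); ((7,25),((2,4),(6,6),(6,2,6,4))); ((7,26),((2,4),(6,7),(6,2,14,4))); ((7,29),((2,4),(6,10),(5,3,6,4))); ((7,30),((2,4),(6,11),(7,3,14,4))); ((7,33),((2,4),(6,14),(7,3,6,4))); ((7,34),((2,4),(6,15),(5,3,14,4))); ((8,3),((2,6),(1,8),(4,9,2,8))); ((8,4),((2,6),(1,9),(6,9,2,8))); ((8,5),((2,6),(1,12),(12,9,10,8))); ((8,6),((2,6),(1,13),(14,9,10,8))); ((8,15),((2,6),(3,8),(5,11,2,8))); ((8,16),((2,6),(3,9),(7,11,2,8))); ((8,17),((2,6),(3,12),(15,11,10,8))); ((8,18),((2,6),(3,13),(13,11,10,8))); ((8,19),((2,6),(6,0),(0,6,6,4))); ((8,20),((2,6),(6,1),(8,6,14,4))); ((8,23),((2,6),(6,4),(2,6,6,4))); ((8,24),((2,6),(6,5),(10,6,14,4))); ((8,27),((2,6),(6,8),(1,7,6,4))); ((8,28),((2,6),(6,9),(11,7,14,4))); ((8,31),((2,6),(6,12),(3,7,6,4))); ((8,32),((2,6),(6,13),(9,7,14,4)));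 ((9,1),((2,8),(1,4),(4,1,8,2))); ((9,2),((2,8),(1,6),(6,1,8,2))); ((9,5),((2,8),(1,12),(4,1,10,2))); ((9,6),((2,8),(1,13),(6,3,10,2))); ((9,13),((2,8),(3,4),(5,1,8,2))); ((9,14),((2,8),(3,6),(7,1,8,2))); ((9,17),((2,8),(3,12),(5,1,10,2))); ((9,18),((2,8),(3,13),(7,3,10,2))); ((9,20),((2,8),(6,1),(4,2,9,1))); ((9,22),((2,8),(6,3),(4,2,11,1))); ((9,24),((2,8),(6,5),(5,3,9,1))); ((9,26),((2,8),(6,7),(7,3,11,1))); ((9,28),((2,8),(6,9),(6,2,9,1))); ((9,30),((2,8),(6,11),(6,2,11,1))); ((9,32),((2,8),(6,13),(7,3,9,1))); ((9,34),((2,8),(6,15),(5,3,11,1))); ((10,1),((2,9),(1,4),(4,9,8,2))); ((10,2),((2,9),(1,6),(6,9,8,2))); ((10,5),((2,9),(1,12),(12,9,10,2))); ((10,6),((2,9),(1,13),(14,11,10,2))); ((10,13),((2,9),(3,4),(5,11,8,2))); ((10,14),((2,9),(3,6),(7,11,8,2))); ((10,17),((2,9),(3,12),(15,11,10,2))); ((10,18),((2,9),(3,13),(13,9,10,2))); ((10,19),((2,9),(6,0),(0,6,9,1))); ((10,21),((2,9),(6,2),(8,6,11,1))); ((10,23),((2,9),(6,4),(1,7,9,1))); ((10,25),((2,9),(6,6),(11,7,11,1))); ((10,27),((2,9),(6,8),(2,6,9,1))); ((10,29),((2,9),(6,10),(10,6,11,1))); ((10,31),((2,9),(6,12),(3,7,9,1)));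 ((10,33),((2,9),(6,14),(9,7,11,1))); ((11,1),((2,12),(1,4),(4,1,8,10))); ((11,2),((2,12),(1,6),(6,3,8,10))); ((11,3),((2,12),(1,8),(4,1,2,10))); ((11,4),((2,12),(1,9),(6,3,2,10))); ((11,13),((2,12),(3,4),(5,1,8,10))); ((11,14),((2,12),(3,6),(7,3,8,10))); ((11,15),((2,12),(3,8),(5,1,2,10))); ((11,16),((2,12),(3,9),(7,3,2,10))); ((11,20),((2,12),(6,1),(4,2,13,5))); ((11,21),((2,12),(6,2),(4,2,7,5))); ((11,24),((2,12),(6,5),(5,3,13,5))); ((11,25),((2,12),(6,6),(7,3,7,5))); ((11,28),((2,12),(6,9),(7,3,13,5))); ((11,29),((2,12),(6,10),(5,3,7,5))); ((11,32),((2,12),(6,13),(6,2,13,5))); ((11,33),((2,12),(6,14),(6,2,7,5))); ((12,1),((2,13),(1,4),(4,9,8,10))); ((12,2),((2,13),(1,6),(6,11,8,10))); ((12,3),((2,13),(1,8),(12,9,2,10))); ((12,4),((2,13),(1,9),(14,11,2,10))); ((12,13),((2,13),(3,4),(5,11,8,10))); ((12,14),((2,13),(3,6),(7,9,8,10))); ((12,15),((2,13),(3,8),(15,11,2,10))); ((12,16),((2,13),(3,9),(13,9,2,10))); ((12,19),((2,13),(6,0),(0,6,13,5))); ((12,22),((2,13),(6,3),(8,6,7,5))); ((12,23),((2,13),(6,4),(1,7,13,5))); ((12,26),((2,13),(6,7),(11,7,7,5))); ((12,27),((2,13),(6,8),(3,7,13,5))); ((12,30),((2,13),(6,11),(9,7,7,5)));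 ((12,31),((2,13),(6,12),(2,6,13,5))); ((12,34),((2,13),(6,15),(10,6,7,5))); ((13,3),((3,4),(1,8),(4,5,2,8))); ((13,4),((3,4),(1,9),(14,5,2,8))); ((13,5),((3,4),(1,12),(4,5,10,8))); ((13,6),((3,4),(1,13),(14,5,10,8))); ((13,9),((3,4),(2,8),(1,5,2,8))); ((13,10),((3,4),(2,9),(11,5,2,8))); ((13,11),((3,4),(2,12),(1,5,10,8))); ((13,12),((3,4),(2,13),(11,5,10,8))); ((13,21),((3,4),(6,2),(4,10,6,12))); ((13,22),((3,4),(6,3),(4,10,14,12))); ((13,25),((3,4),(6,6),(14,10,14,12))); ((13,26),((3,4),(6,7),(14,10,6,12))); ((13,27),((3,4),(6,8),(1,5,6,12))); ((13,28),((3,4),(6,9),(11,5,14,12))); ((13,31),((3,4),(6,12),(1,5,14,12))); ((13,32),((3,4),(6,13),(11,5,6,12))); ((14,3),((3,6),(1,8),(4,13,2,8))); ((14,4),((3,6),(1,9),(14,13,2,8))); ((14,5),((3,6),(1,12),(12,13,10,8))); ((14,6),((3,6),(1,13),(6,13,10,8))); ((14,9),((3,6),(2,8),(1,7,2,8))); ((14,10),((3,6),(2,9),(11,7,2,8))); ((14,11),((3,6),(2,12),(3,7,10,8))); ((14,12),((3,6),(2,13),(9,7,10,8))); ((14,19),((3,6),(6,0),(0,6,6,12))); ((14,20),((3,6),(6,1),(8,6,14,12))); ((14,23),((3,6),(6,4),(2,6,14,12))); ((14,24),((3,6),(6,5),(10,6,6,12))); ((14,29),((3,6),(6,10),(5,9,6,12)));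 ((14,30),((3,6),(6,11),(7,9,14,12))); ((14,33),((3,6),(6,14),(13,9,14,12))); ((14,34),((3,6),(6,15),(15,9,6,12))); ((15,1),((3,8),(1,4),(4,5,8,2))); ((15,2),((3,8),(1,6),(14,5,8,2))); ((15,5),((3,8),(1,12),(4,5,10,2))); ((15,6),((3,8),(1,13),(14,15,10,2))); ((15,7),((3,8),(2,4),(1,5,8,2))); ((15,8),((3,8),(2,6),(11,5,8,2))); ((15,11),((3,8),(2,12),(1,5,10,2))); ((15,12),((3,8),(2,13),(11,15,10,2))); ((15,20),((3,8),(6,1),(4,10,9,3))); ((15,22),((3,8),(6,3),(4,10,11,3))); ((15,23),((3,8),(6,4),(1,5,9,3))); ((15,25),((3,8),(6,6),(11,5,11,3))); ((15,28),((3,8),(6,9),(14,10,11,3))); ((15,30),((3,8),(6,11),(14,10,9,3))); ((15,31),((3,8),(6,12),(1,5,11,3))); ((15,33),((3,8),(6,14),(11,5,9,3))); ((16,1),((3,9),(1,4),(4,13,8,2))); ((16,2),((3,9),(1,6),(14,13,8,2))); ((16,5),((3,9),(1,12),(12,13,10,2))); ((16,6),((3,9),(1,13),(6,7,10,2))); ((16,7),((3,9),(2,4),(1,7,8,2))); ((16,8),((3,9),(2,6),(11,7,8,2))); ((16,11),((3,9),(2,12),(3,7,10,2))); ((16,12),((3,9),(2,13),(9,13,10,2))); ((16,19),((3,9),(6,0),(0,6,9,3))); ((16,21),((3,9),(6,2),(8,6,11,3))); ((16,24),((3,9),(6,5),(5,9,9,3))); ((16,26),((3,9),(6,7),(7,9,11,3)));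 ((16,27),((3,9),(6,8),(2,6,11,3))); ((16,29),((3,9),(6,10),(10,6,9,3))); ((16,32),((3,9),(6,13),(13,9,11,3))); ((16,34),((3,9),(6,15),(15,9,9,3))); ((17,1),((3,12),(1,4),(4,5,8,10))); ((17,2),((3,12),(1,6),(14,15,8,10))); ((17,3),((3,12),(1,8),(4,5,2,10))); ((17,4),((3,12),(1,9),(14,15,2,10))); ((17,7),((3,12),(2,4),(1,5,8,10))); ((17,8),((3,12),(2,6),(11,15,8,10))); ((17,9),((3,12),(2,8),(1,5,2,10))); ((17,10),((3,12),(2,9),(11,15,2,10))); ((17,20),((3,12),(6,1),(4,10,13,15))); ((17,21),((3,12),(6,2),(4,10,7,15))); ((17,23),((3,12),(6,4),(1,5,13,15))); ((17,26),((3,12),(6,7),(11,5,7,15))); ((17,27),((3,12),(6,8),(1,5,7,15))); ((17,30),((3,12),(6,11),(11,5,13,15))); ((17,32),((3,12),(6,13),(14,10,7,15))); ((17,33),((3,12),(6,14),(14,10,13,15))); ((18,1),((3,13),(1,4),(4,13,8,10))); ((18,2),((3,13),(1,6),(14,7,8,10))); ((18,3),((3,13),(1,8),(12,13,2,10))); ((18,4),((3,13),(1,9),(6,7,2,10))); ((18,7),((3,13),(2,4),(1,7,8,10))); ((18,8),((3,13),(2,6),(11,13,8,10))); ((18,9),((3,13),(2,8),(3,7,2,10))); ((18,10),((3,13),(2,9),(9,13,2,10))); ((18,19),((3,13),(6,0),(0,6,13,15))); ((18,22),((3,13),(6,3),(8,6,7,15))); ((18,24),((3,13),(6,5),(5,9,13,15)));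 ((18,25),((3,13),(6,6),(7,9,7,15))); ((18,28),((3,13),(6,9),(13,9,7,15))); ((18,29),((3,13),(6,10),(15,9,13,15))); ((18,31),((3,13),(6,12),(2,6,7,15))); ((18,34),((3,13),(6,15),(10,6,13,15))); ((19,0),((6,0),(0,6),(6,0,0,6))); ((19,2),((6,0),(1,6),(6,0,8,6))); ((19,4),((6,0),(1,9),(6,0,2,9))); ((19,6),((6,0),(1,13),(6,0,10,13))); ((19,8),((6,0),(2,6),(6,0,4,6))); ((19,10),((6,0),(2,9),(6,0,1,9))); ((19,12),((6,0),(2,13),(6,0,5,13))); ((19,14),((6,0),(3,6),(6,0,12,6))); ((19,16),((6,0),(3,9),(6,0,3,9))); ((19,18),((6,0),(3,13),(6,0,15,13))); ((19,25),((6,0),(6,6),(6,0,6,6))); ((19,26),((6,0),(6,7),(6,0,14,14))); ((19,28),((6,0),(6,9),(6,0,9,9))); ((19,30),((6,0),(6,11),(6,0,11,11))); ((19,32),((6,0),(6,13),(6,0,13,13))); ((19,33),((6,0),(6,14),(6,0,7,7))); ((20,0),((6,1),(0,6),(6,8,0,6))); ((20,2),((6,1),(1,6),(6,8,8,6))); ((20,4),((6,1),(1,9),(14,4,2,9))); ((20,6),((6,1),(1,13),(14,4,10,13))); ((20,8),((6,1),(2,6),(6,8,4,14))); ((20,9),((6,1),(2,8),(2,4,1,9))); ((20,11),((6,1),(2,12),(2,4,5,13))); ((20,14),((6,1),(3,6),(6,8,12,14))); ((20,15),((6,1),(3,8),(10,4,3,9))); ((20,17),((6,1),(3,12),(10,4,15,13)));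 ((20,25),((6,1),(6,6),(14,8,14,14))); ((20,26),((6,1),(6,7),(14,8,6,6))); ((20,27),((6,1),(6,8),(2,4,9,9))); ((20,29),((6,1),(6,10),(10,12,11,11))); ((20,31),((6,1),(6,12),(2,4,13,13))); ((20,34),((6,1),(6,15),(10,12,7,7))); ((21,0),((6,2),(0,6),(6,4,0,6))); ((21,2),((6,2),(1,6),(14,4,8,6))); ((21,4),((6,2),(1,9),(6,8,2,9))); ((21,6),((6,2),(1,13),(14,12,10,13))); ((21,7),((6,2),(2,4),(2,4,4,6))); ((21,10),((6,2),(2,9),(6,8,1,11))); ((21,11),((6,2),(2,12),(2,4,5,7))); ((21,13),((6,2),(3,4),(10,4,12,6))); ((21,16),((6,2),(3,9),(6,8,3,11))); ((21,17),((6,2),(3,12),(10,4,15,7))); ((21,23),((6,2),(6,4),(2,4,6,6))); ((21,24),((6,2),(6,5),(10,12,14,14))); ((21,28),((6,2),(6,9),(14,8,11,11))); ((21,30),((6,2),(6,11),(14,8,9,9))); ((21,31),((6,2),(6,12),(2,4,7,7))); ((21,34),((6,2),(6,15),(10,12,13,13))); ((22,0),((6,3),(0,6),(6,12,0,6))); ((22,2),((6,3),(1,6),(14,12,8,6))); ((22,4),((6,3),(1,9),(14,12,2,9))); ((22,6),((6,3),(1,13),(6,8,10,13))); ((22,7),((6,3),(2,4),(2,4,4,14))); ((22,9),((6,3),(2,8),(2,4,1,11))); ((22,12),((6,3),(2,13),(6,8,5,7))); ((22,13),((6,3),(3,4),(10,4,12,14))); ((22,15),((6,3),(3,8),(10,4,3,11)));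 ((22,18),((6,3),(3,13),(6,8,15,7))); ((22,23),((6,3),(6,4),(2,4,14,14))); ((22,24),((6,3),(6,5),(10,12,6,6))); ((22,27),((6,3),(6,8),(2,4,11,11))); ((22,29),((6,3),(6,10),(10,12,9,9))); ((22,32),((6,3),(6,13),(14,8,7,7))); ((22,33),((6,3),(6,14),(14,8,13,13))); ((23,0),((6,4),(0,6),(6,2,0,6))); ((23,2),((6,4),(1,6),(6,2,8,14))); ((23,3),((6,4),(1,8),(4,1,2,9))); ((23,5),((6,4),(1,12),(4,1,10,13))); ((23,8),((6,4),(2,6),(6,2,4,6))); ((23,10),((6,4),(2,9),(7,1,1,9))); ((23,12),((6,4),(2,13),(7,1,5,13))); ((23,14),((6,4),(3,6),(6,2,12,14))); ((23,15),((6,4),(3,8),(5,1,3,9))); ((23,17),((6,4),(3,12),(5,1,15,13))); ((23,21),((6,4),(6,2),(4,2,6,6))); ((23,22),((6,4),(6,3),(4,2,14,14))); ((23,28),((6,4),(6,9),(7,1,13,13))); ((23,29),((6,4),(6,10),(5,3,7,7))); ((23,32),((6,4),(6,13),(7,1,9,9))); ((23,34),((6,4),(6,15),(5,3,11,11))); ((24,0),((6,5),(0,6),(6,10,0,6))); ((24,2),((6,5),(1,6),(6,10,8,14))); ((24,3),((6,5),(1,8),(12,5,2,9))); ((24,5),((6,5),(1,12),(12,5,10,13))); ((24,8),((6,5),(2,6),(6,10,4,14))); ((24,9),((6,5),(2,8),(3,5,1,9))); ((24,11),((6,5),(2,12),(3,5,5,13))); ((24,14),((6,5),(3,6),(6,10,12,6)));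 ((24,16),((6,5),(3,9),(9,5,3,9))); ((24,18),((6,5),(3,13),(9,5,15,13))); ((24,21),((6,5),(6,2),(12,10,14,14))); ((24,22),((6,5),(6,3),(12,10,6,6))); ((24,27),((6,5),(6,8),(3,5,13,13))); ((24,30),((6,5),(6,11),(9,15,7,7))); ((24,31),((6,5),(6,12),(3,5,9,9))); ((24,33),((6,5),(6,14),(9,15,11,11))); ((25,0),((6,6),(0,6),(6,6,0,6))); ((25,2),((6,6),(1,6),(14,14,8,14))); ((25,3),((6,6),(1,8),(4,9,2,9))); ((25,5),((6,6),(1,12),(12,13,10,13))); ((25,7),((6,6),(2,4),(2,6,4,6))); ((25,10),((6,6),(2,9),(7,11,1,11))); ((25,11),((6,6),(2,12),(3,7,5,7))); ((25,13),((6,6),(3,4),(10,14,12,14))); ((25,15),((6,6),(3,8),(5,11,3,11))); ((25,18),((6,6),(3,13),(9,7,15,7))); ((25,19),((6,6),(6,0),(0,6,6,6))); ((25,20),((6,6),(6,1),(8,14,14,14))); ((25,27),((6,6),(6,8),(1,7,7,7))); ((25,30),((6,6),(6,11),(11,13,13,13))); ((25,32),((6,6),(6,13),(13,11,11,11))); ((25,34),((6,6),(6,15),(15,9,9,9))); ((26,0),((6,7),(0,6),(6,14,0,6))); ((26,2),((6,7),(1,6),(14,6,8,14))); ((26,3),((6,7),(1,8),(12,13,2,9))); ((26,5),((6,7),(1,12),(4,9,10,13))); ((26,7),((6,7),(2,4),(2,6,4,14))); ((26,9),((6,7),(2,8),(3,7,1,11))); ((26,12),((6,7),(2,13),(7,11,5,7)));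 ((26,13),((6,7),(3,4),(10,14,12,6))); ((26,16),((6,7),(3,9),(9,7,3,11))); ((26,17),((6,7),(3,12),(5,11,15,7))); ((26,19),((6,7),(6,0),(0,6,14,14))); ((26,20),((6,7),(6,1),(8,14,6,6))); ((26,28),((6,7),(6,9),(13,11,7,7))); ((26,29),((6,7),(6,10),(15,9,13,13))); ((26,31),((6,7),(6,12),(1,7,11,11))); ((26,33),((6,7),(6,14),(11,13,9,9))); ((27,0),((6,8),(0,6),(6,1,0,6))); ((27,1),((6,8),(1,4),(4,1,8,6))); ((27,4),((6,8),(1,9),(6,2,2,11))); ((27,5),((6,8),(1,12),(4,1,10,7))); ((27,8),((6,8),(2,6),(7,1,4,6))); ((27,10),((6,8),(2,9),(6,2,1,9))); ((27,12),((6,8),(2,13),(7,3,5,13))); ((27,13),((6,8),(3,4),(5,1,12,6))); ((27,16),((6,8),(3,9),(6,2,3,11))); ((27,17),((6,8),(3,12),(5,1,15,7))); ((27,20),((6,8),(6,1),(4,2,9,9))); ((27,22),((6,8),(6,3),(4,2,11,11))); ((27,24),((6,8),(6,5),(5,3,13,13))); ((27,25),((6,8),(6,6),(7,1,7,7))); ((27,33),((6,8),(6,14),(7,1,6,6))); ((27,34),((6,8),(6,15),(5,3,14,14))); ((28,0),((6,9),(0,6),(6,9,0,6))); ((28,1),((6,9),(1,4),(4,9,8,6))); ((28,4),((6,9),(1,9),(14,14,2,11))); ((28,5),((6,9),(1,12),(12,13,10,7))); ((28,8),((6,9),(2,6),(7,11,4,14))); ((28,9),((6,9),(2,8),(2,6,1,9)));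 ((28,11),((6,9),(2,12),(3,7,5,13))); ((28,13),((6,9),(3,4),(5,11,12,14))); ((28,15),((6,9),(3,8),(10,14,3,11))); ((28,18),((6,9),(3,13),(9,13,15,7))); ((28,19),((6,9),(6,0),(0,6,9,9))); ((28,21),((6,9),(6,2),(8,14,11,11))); ((28,23),((6,9),(6,4),(1,7,13,13))); ((28,26),((6,9),(6,7),(11,13,7,7))); ((28,33),((6,9),(6,14),(13,11,14,14))); ((28,34),((6,9),(6,15),(15,9,6,6))); ((29,0),((6,10),(0,6),(6,5,0,6))); ((29,1),((6,10),(1,4),(12,5,8,6))); ((29,4),((6,10),(1,9),(6,10,2,11))); ((29,5),((6,10),(1,12),(12,5,10,7))); ((29,7),((6,10),(2,4),(3,5,4,6))); ((29,10),((6,10),(2,9),(6,10,1,11))); ((29,11),((6,10),(2,12),(3,5,5,7))); ((29,14),((6,10),(3,6),(9,5,12,6))); ((29,16),((6,10),(3,9),(6,10,3,9))); ((29,18),((6,10),(3,13),(9,15,15,13))); ((29,20),((6,10),(6,1),(12,10,11,11))); ((29,22),((6,10),(6,3),(12,10,9,9))); ((29,23),((6,10),(6,4),(3,5,7,7))); ((29,26),((6,10),(6,7),(9,15,13,13))); ((29,31),((6,10),(6,12),(3,5,6,6))); ((29,32),((6,10),(6,13),(9,15,14,14))); ((30,0),((6,11),(0,6),(6,13,0,6))); ((30,1),((6,11),(1,4),(12,13,8,6))); ((30,4),((6,11),(1,9),(14,6,2,11))); ((30,5),((6,11),(1,12),(4,9,10,7))); ((30,7),((6,11),(2,4),(3,7,4,14)));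 ((30,9),((6,11),(2,8),(2,6,1,11))); ((30,12),((6,11),(2,13),(7,9,5,7))); ((30,14),((6,11),(3,6),(9,7,12,14))); ((30,15),((6,11),(3,8),(10,14,3,9))); ((30,17),((6,11),(3,12),(5,11,15,13))); ((30,19),((6,11),(6,0),(0,6,11,11))); ((30,21),((6,11),(6,2),(8,14,9,9))); ((30,24),((6,11),(6,5),(15,9,7,7))); ((30,25),((6,11),(6,6),(13,11,13,13))); ((30,31),((6,11),(6,12),(1,7,14,14))); ((30,32),((6,11),(6,13),(11,13,6,6))); ((31,0),((6,12),(0,6),(6,3,0,6))); ((31,1),((6,12),(1,4),(4,1,8,14))); ((31,3),((6,12),(1,8),(4,1,2,11))); ((31,6),((6,12),(1,13),(6,2,10,7))); ((31,8),((6,12),(2,6),(7,3,4,6))); ((31,10),((6,12),(2,9),(7,3,1,9))); ((31,12),((6,12),(2,13),(6,2,5,13))); ((31,13),((6,12),(3,4),(5,1,12,14))); ((31,15),((6,12),(3,8),(5,1,3,11))); ((31,18),((6,12),(3,13),(6,2,15,7))); ((31,20),((6,12),(6,1),(4,2,13,13))); ((31,21),((6,12),(6,2),(4,2,7,7))); ((31,24),((6,12),(6,5),(5,3,9,9))); ((31,26),((6,12),(6,7),(7,1,11,11))); ((31,29),((6,12),(6,10),(5,3,6,6))); ((31,30),((6,12),(6,11),(7,1,14,14))); ((32,0),((6,13),(0,6),(6,11,0,6))); ((32,1),((6,13),(1,4),(4,9,8,14))); ((32,3),((6,13),(1,8),(12,13,2,11))); ((32,6),((6,13),(1,13),(14,14,10,7)));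 ((32,8),((6,13),(2,6),(7,9,4,14))); ((32,9),((6,13),(2,8),(3,7,1,9))); ((32,11),((6,13),(2,12),(2,6,5,13))); ((32,13),((6,13),(3,4),(5,11,12,6))); ((32,16),((6,13),(3,9),(9,13,3,11))); ((32,17),((6,13),(3,12),(10,14,15,7))); ((32,19),((6,13),(6,0),(0,6,13,13))); ((32,22),((6,13),(6,3),(8,14,7,7))); ((32,23),((6,13),(6,4),(1,7,9,9))); ((32,25),((6,13),(6,6),(11,13,11,11))); ((32,29),((6,13),(6,10),(15,9,14,14))); ((32,30),((6,13),(6,11),(13,11,6,6))); ((33,0),((6,14),(0,6),(6,7,0,6))); ((33,1),((6,14),(1,4),(12,13,8,14))); ((33,3),((6,14),(1,8),(4,9,2,11))); ((33,6),((6,14),(1,13),(14,6,10,7))); ((33,7),((6,14),(2,4),(3,7,4,6))); ((33,10),((6,14),(2,9),(7,9,1,11))); ((33,11),((6,14),(2,12),(2,6,5,7))); ((33,14),((6,14),(3,6),(9,13,12,14))); ((33,15),((6,14),(3,8),(5,11,3,9))); ((33,17),((6,14),(3,12),(10,14,15,13))); ((33,19),((6,14),(6,0),(0,6,7,7))); ((33,22),((6,14),(6,3),(8,14,13,13))); ((33,24),((6,14),(6,5),(15,9,11,11))); ((33,26),((6,14),(6,7),(13,11,9,9))); ((33,27),((6,14),(6,8),(1,7,6,6))); ((33,28),((6,14),(6,9),(11,13,14,14))); ((34,0),((6,15),(0,6),(6,15,0,6))); ((34,1),((6,15),(1,4),(12,5,8,14))); ((34,3),((6,15),(1,8),(12,5,2,11)));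 ((34,6),((6,15),(1,13),(6,10,10,7))); ((34,7),((6,15),(2,4),(3,5,4,14))); ((34,9),((6,15),(2,8),(3,5,1,11))); ((34,12),((6,15),(2,13),(6,10,5,7))); ((34,14),((6,15),(3,6),(9,15,12,6))); ((34,16),((6,15),(3,9),(9,15,3,9))); ((34,18),((6,15),(3,13),(6,10,15,13))); ((34,20),((6,15),(6,1),(12,10,7,7))); ((34,21),((6,15),(6,2),(12,10,13,13))); ((34,23),((6,15),(6,4),(3,5,11,11))); ((34,25),((6,15),(6,6),(9,15,9,9))); ((34,27),((6,15),(6,8),(3,5,14,14))); ((34,28),((6,15),(6,9),(9,15,6,6)))].
Definition Dtab : seq (seq bool) := [:: [:: false; false; false; false; false; false; false; false; false; false; false; false; false; false; false; false; false; false; false; true; true; true; true; true; true; true; true; true; true; true; true; true; true; true; true]; [:: false; false; false; false; false; false; false; false; false; true; true; true; true; false; false; true; true; true; true; false; false; false; false; false; false; false; false; true; true; true; true; true; true; true; true]; [:: false; false; false; false; false; false; false; false; false; true; true; true; true; false; false; true; true; true; true; true; true; true; true; true; true; true; true; false; false; false; false; false; false; false; false]; [:: false; false; false; false; false; false; false; true; true; false; false; true; true; true; true; false; false; true; true; false; false; false; false; true; true; true; true; false; false; false; false; true; true; true; true]; [:: false; false; false; false; false; false; false; true; true; false; false; true; true; true; true; false; false; true; true; true; true; true; true; false; false; false; false; true; true; true; true; false; false; false; false]; [:: false; false; false; false; false; false; false; true; true; true; true; false; false; true; true; true; true; false; false; false; false; false; false; true; true; true; true; true; true; true; true; false; false;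 false; false]; [:: false; false; false; false; false; false; false; true; true; true; true; false; false; true; true; true; true; false; false; true; true; true; true; false; false; false; false; false; false; false; false; true; true; true; true]; [:: false; false; false; true; true; true; true; false; false; false; false; false; false; false; false; true; true; true; true; false; false; true; true; false; false; true; true; false; false; true; true; false; false; true; true]; [:: false; false; false; true; true; true; true; false; false; false; false; false; false; false; false; true; true; true; true; true; true; false; false; true; true; false; false; true; true; false; false; true; true; false; false]; [:: false; true; true; false; false; true; true; false; false; false; false; false; false; true; true; false; false; true; true; false; true; false; true; false; true; false; true; false; true; false; true; false; true; false; true]; [:: false; true; true; false; false; true; true; false; false; false; false; false; false; true; true; false; false; true; true; true; false; true; false; true; false; true; false; true; false; true; false; true; false; true; false]; [:: false; true; true; true; true; false; false; false; false; false; false; false; false; true; true; true; true; false; false; false; true; true; false; false; true; true; false; false; true; true; false; false; true; true; false]; [:: false; true; true; true; true; false; false; false; false; false; false; false; false; true; true; true; true; false; false; true; false; false; true; true; false; false; true; true; false; false; true; true; false; false; true]; [:: false; false; false; true; true; true; true; false; false; true; true; true; true; false; false; false; false; false; false; false; false; true; true; false; false; true; true; true; true; false; false; true; true; false; false]; [:: false; false; false; true; true; true; true; false; false; true; true; true; true; false; false; false; false; false; false; true; true; false; false; true; true; false; false; false; false; true; true; false; false; true; true]; [:: false; true; true; false; false; true; true; true; true; false; false; true; true; false; false; false; false; false; false; false; true; false; true; true; false; true; false; false; true; false; true; true; false; true; false]; [:: false; true; true; false; false; true; true; true; true; false; false; true; true; false; false; false; false; false; false; true; false; true; false; false; true; false;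 true; true; false; true; false; false; true; false; true]; [:: false; true; true; true; true; false; false; true; true; true; true; false; false; false; false; false; false; false; false; false; true; true; false; true; false; false; true; true; false; false; true; false; true; true; false]; [:: false; true; true; true; true; false; false; true; true; true; true; false; false; false; false; false; false; false; false; true; false; false; true; false; true; true; false; false; true; true; false; true; false; false; true]; [:: true; false; true; false; true; false; true; false; true; false; true; false; true; false; true; false; true; false; true; false; false; false; false; false; false; true; true; false; true; false; true; false; true; true; false]; [:: true; false; true; false; true; false; true; false; true; true; false; true; false; false; true; true; false; true; false; false; false; false; false; false; false; true; true; true; false; true; false; true; false; false; true]; [:: true; false; true; false; true; false; true; true; false; false; true; true; false; true; false; false; true; true; false; false; false; false; false; true; true; false; false; false; true; false; true; true; false; false; true]; [:: true; false; true; false; true; false; true; true; false; true; false; false; true; true; false; true; false; false; true; false; false; false; false; true; true; false; false; true; false; true; false; false; true; true; false]; [:: true; false; true; true; false; true; false; false; true; false; true; false; true; false; true; true; false; true; false; false; false; true; true; false; false; false; false; false; true; true; false; false; true; false; true]; [:: true; false; true; true; false; true; false; false; true; true; false; true; false; false; true; false; true; false; true; false; false; true; true; false; false; false; false; true; false; false; true; true; false; true; false]; [:: true; false; true; true; false; true; false; true; false; false; true; true; false; true; false; true; false; false; true; true; true; false; false; false; false; false; false; true; false; false; true; false; true; false; true]; [:: true; false; true; true; false; true; false; true; false; true; false; false; true; true; false; false; true; true; false; true; true; false; false; false; false; false; false; false; true; true; false; true; false; true; false]; [:: true; true; false; false; true; true; false; false; true; false; true; false; true; true; false; false; true; true; false;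 false; true; false; true; false; true; true; false; false; false; false; false; false; false; true; true]; [:: true; true; false; false; true; true; false; false; true; true; false; true; false; true; false; true; false; false; true; true; false; true; false; true; false; false; true; false; false; false; false; false; false; true; true]; [:: true; true; false; false; true; true; false; true; false; false; true; true; false; false; true; false; true; false; true; false; true; false; true; true; false; false; true; false; false; false; false; true; true; false; false]; [:: true; true; false; false; true; true; false; true; false; true; false; false; true; false; true; true; false; true; false; true; false; true; false; false; true; true; false; false; false; false; false; true; true; false; false]; [:: true; true; false; true; false; false; true; false; true; false; true; false; true; true; false; true; false; false; true; false; true; true; false; false; true; false; true; false; false; true; true; false; false; false; false]; [:: true; true; false; true; false; false; true; false; true; true; false; true; false; true; false; false; true; true; false; true; false; false; true; true; false; true; false; false; false; true; true; false; false; false; false]; [:: true; true; false; true; false; false; true; true; false; false; true; true; false; false; true; true; false; true; false; true; false; false; true; false; true; false; true; true; true; false; false; false; false; false; false]; [:: true; true; false; true; false; false; true; true; false; true; false; false; true; false; true; false; true; false; true; false; true; true; false; true; false; true; false; true; true; false; false; false; false; false; false]].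
Definition Snat : seq nat := [:: 0; 19; 25; 30; 32].
Definition Enat : nat := 1.
Definition cN (n : nat) : C :=
  ((odd n, odd n./2), (odd n./2./2, odd n./2./2./2)).
Definition Np (p : nat * nat) : C * C := (cN p.1, cN p.2).
Definition L : seq (C * C) := map Np Lnat.
Definition zCC : C * C := (zeroC, zeroC).
Definition I := iota 0 35.
Definition Li (i : nat) := nth zCC L i.
Definition D (i j : nat) : bool := nth false (nth [::] Dtab i) j.
Definition admC (c : C * C) : bool :=
  ~~ has (fun r => [&& r != zeroC, mulC r c.1 == zeroC & mulC r c.2 == zeroC]) allC.
Definition awcheck (c : C * C) : bool :=
  has (fun w => let: (k, (c', d', e, f, g, h)) := w in
     (Np k == c) && inv2C c.1 c.2 (cN c') (cN d') (cN e) (cN f) (cN g) (cN h)) AWnat.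
Definition distC (a b : C * C) : bool :=
  ~~ has (fun z => (z != zCC) && memC z b) (genL a).
Definition dwvalid (w : (nat*nat)*((nat*nat)*(nat*nat)*(nat*nat*nat*nat))) : bool :=
  let: ((i, j), (p, q, (e, f, g, h))) := w in
     [&& genEqC (Li i) (Np p), genEqC (Li j) (Np q) &
         inv2C (cN p.1) (cN p.2) (cN q.1) (cN q.2) (cN e) (cN f) (cN g) (cN h)].

Definition check1 := all (fun c => admC c ==> awcheck c) allCC.
Lemma check1_ok : check1. Proof. by vm_compute. Qed.
Definition check2a := all dwvalid DWnat.
Lemma check2a_ok : check2a. Proof. by vm_compute. Qed.
Definition check2b := all (fun i => all (fun j =>
  distC (Li i) (Li j) ==> ((i, j) \in map fst DWnat)) I) I.
Lemma check2b_ok : check2b. Proof. by vm_compute. Qed.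
Definition check3 := all (fun i => all (fun j => D i j == distC (Li i) (Li j)) I) I.
Lemma check3_ok : check3. Proof. by vm_compute. Qed.
Definition check4 := all (fun c => admC c ==> has (fun i => genEqC c (Li i)) I) allCC.
Lemma check4_ok : check4. Proof. by vm_compute. Qed.
Definition check5 := [&& all (fun i => admC (Li i)) I, uniq allCC, uniq L & size L == 35%N].
Lemma check5_ok : check5. Proof. by vm_compute. Qed.
Definition check6 := all (fun i => all (fun j => genEqC (Li i) (Li j) ==> (i == j)) I) I.
Lemma check6_ok : check6. Proof. by vm_compute. Qed.
Definition checkii :=
  count (fun i => has (fun c => genEqC (Li i) c && (unitC c.1 || unitC c.2)) allCC) I == 26%N.
Lemma checkii_ok : checkii. Proof. by vm_compute. Qed.
Definition checkiii := all (fun i => count (fun j => (j != i) && ~~ D i j) I == 18%N) I.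
Lemma checkiii_ok : checkiii. Proof. by vm_compute. Qed.
Definition checkiv := all (fun i => all (fun j =>
   D i j ==> (count (fun k => ~~ D k i && ~~ D k j) I == 9%N)) I) I.
Lemma checkiv_ok : checkiv. Proof. by vm_compute. Qed.
Definition checkv := all (fun i => all (fun j => D i j ==> all (fun k =>
   D i k ==> D j k ==>
   (count (fun l => [&& ~~ D l i, ~~ D l j & ~~ D l k]) I == 3%N)) I) I) I.
Lemma checkv_ok : checkv. Proof. by vm_compute. Qed.
Definition checkvi := [&& all (fun i => i < 35)%N Snat, uniq Snat, size Snat == 5%N &
   all (fun i => all (fun j => (i != j) ==> D i j) Snat) Snat].
Lemma checkvi_ok : checkvi. Proof. by vm_compute. Qed.
Definition EC := cN Enat.
Definition KC (c : C * C) := ((mulC EC c.1, mulC EC c.2) == c) && (c != zCC).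
Definition TL a := filter (fun c => memC c a && KC c) allCC.
Definition checkK := all (fun i => 3 <= size (TL (Li i)))%N I && (size (filter KC allCC) == 15%N).
Lemma checkK_ok : checkK. Proof. by vm_compute. Qed.


Definition pt (l : C * C) : {set R * R} := gen (decp l).
Definition pti (i : nat) := pt (Li i).

Lemma sizeL : size L = 35%N.
Proof. by case/and4P: check5_ok => _ _ _ /eqP. Qed.
Lemma uniqL : uniq L.
Proof. by case/and4P: check5_ok. Qed.
Lemma LE : L = map Li I.
Proof. by rewrite -[L in LHS](mkseq_nth zCC) sizeL. Qed.
Lemma memL l : l \in L -> exists2 i, (i < 35)%N & l = Li i.
Proof. by rewrite LE => /mapP [i]; rewrite mem_iota => /andP [_ Hi] ->; exists i. Qed.
Lemma LiL i : (i < 35)%N -> Li i \in L.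
Proof. by move=> Hi; rewrite LE; apply: map_f; rewrite mem_iota. Qed.
Lemma countL (P : pred (C * C)) : count P L = count (fun i => P (Li i)) I.
Proof. by rewrite LE count_map. Qed.

Lemma admE c : admissible (decp c) = admC c.
Proof.
case H: (admC c).
  have := allP check1_ok c (allCC_all c); rewrite H /= => /hasP [w _].
  case: w => k [[[[[c' d'] e] f] g] h] /andP [_ Hi].
  apply/existsP; exists (dec (cN c')); apply/existsP; exists (dec (cN d')).
  exact: inv2CP Hi.
move/negbT: H; rewrite negbK => /hasP [r _ /and3P [r0 /eqP E1 /eqP E2]].
apply/negbTE; apply: (@annih_not_adm _ _ _ (dec r)).
- by apply: contra r0 => /eqP; rewrite -dec0 => /dec_inj ->.
- by rewrite -decM E1 dec0.
- by rewrite -decM E2 dec0.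
Qed.

Lemma distCE i j : (i < 35)%N -> (j < 35)%N -> distant (pti i) (pti j) = D i j.
Proof.
move=> Hi Hj.
have HiI : i \in I by rewrite mem_iota.
have HjI : j \in I by rewrite mem_iota.
have := allP (allP check3_ok i HiI) j HjI => /eqP ->.
case H: (distC (Li i) (Li j)).
  have := allP (allP check2b_ok i HiI) j HjI; rewrite H implyTb => /mapP [w Hw Ek].
  have := allP check2a_ok w Hw.
  case: w Hw Ek => [[i' j'] [[p q] [[[e f] g] h]]] _ /= [<- <-].
  case/and3P => Hp Hq Hinv.
  apply/existsP; exists (decp (Np p)); apply/existsP; exists (decp (Np q)).
  by rewrite /represents /pti /pt !genEqCE Hp Hq /=; exact: inv2CP Hinv.
move/negbT: H; rewrite negbK => /hasP [z Hz /andP [z0 Hzb]].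
apply/negbTE/negP => Hd.
have Hza : decp z \in pti i by rewrite /pti /pt memCE.
have Hzb' : decp z \in pti j by rewrite /pti /pt memCE.
have := distant_inter Hd Hza Hzb'.
rewrite -dec0 -/(decp zCC) => /decp_inj Ez.
by rewrite Ez eqxx in z0.
Qed.

Lemma PLeq : projLine R = [set pt l | l in L].
Proof.
apply/setP => X; apply/imsetP/imsetP.
  case=> p; rewrite inE -[p]encpK admE => Hp ->.
  have := allP check4_ok (encp p) (allCC_all _); rewrite Hp implyTb => /hasP [i Hi He].
  exists (Li i); first by apply: LiL; rewrite mem_iota in Hi.
  by apply/eqP; rewrite /pt genEqCE.
case=> l /memL [i Hi ->] ->; exists (decp (Li i)) => //.
rewrite inE admE; case/and4P: check5_ok => /allP H _ _ _; apply: H; by rewrite mem_iota add0n leq0n Hi.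
Qed.

Lemma pt_inj : {in L &, injective pt}.
Proof.
move=> a b /memL [i Hi ->] /memL [j Hj ->] /eqP; rewrite /pt genEqCE => H.
have HiI : i \in I by rewrite mem_iota add0n leq0n Hi.
have HjI : j \in I by rewrite mem_iota add0n leq0n Hj.
by move: (allP (allP check6_ok i HiI) j HjI); rewrite H implyTb => /eqP ->.
Qed.

Section GenCard.
Variables (T U : finType) (f : T -> U) (s : seq T).
Hypotheses (Hu : uniq s) (Hinj : {in s &, injective f}).
Lemma gcard (Q : pred U) : #|[set X in [set f x | x in s] | Q X]| = count (fun x => Q (f x)) s.
Proof.
have -> : [set X in [set f x | x in s] | Q X] = [set f x | x in filter (fun x => Q (f x)) s].
  apply/setP => X; rewrite !inE; apply/andP/imsetP.
    by case=> /imsetP [i Hi ->] HQ; exists i; [rewrite mem_filter HQ Hi|].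
  case=> i; rewrite mem_filter => /andP [HQ Hi] ->; split; last exact: HQ.
  by apply/imsetP; exists i.
rewrite card_in_imset; last first.
  by move=> i j; rewrite !mem_filter => /andP [_ Hi] /andP [_ Hj]; apply: Hinj.
rewrite (card_uniqP _); last exact: filter_uniq Hu.
by rewrite size_filter.
Qed.
Lemma gcard_all : #|[set f x | x in s]| = size s.
Proof. by rewrite card_in_imset // (card_uniqP _). Qed.
End GenCard.

Lemma card_count (Q : pred {set R * R}) :
  #|[set X in [set pt l | l in L] | Q X]| = count (fun i => Q (pti i)) I.
Proof. by rewrite (gcard uniqL pt_inj) countL. Qed.

Lemma PI X : X \in [set pt l | l in L] -> exists2 i, (i < 35)%N & X = pti i.
Proof. by case/imsetP => l /memL [i Hi ->] ->; exists i. Qed.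


Lemma memI i : (i \in I) = (i < 35)%N.
Proof. by rewrite mem_iota add0n leq0n. Qed.

Lemma unit_part (i : nat) :
  [exists p : R * R, represents p (pti i) && ((p.1 \is a GRing.unit) || (p.2 \is a GRing.unit))]
  = has (fun c => genEqC (Li i) c && (unitC c.1 || unitC c.2)) allCC.
Proof.
apply/existsP/hasP => [[p /andP [H U]]|[c _ /andP [H U]]].
  exists (encp p); first exact: allCC_all.
  move: H U; rewrite /represents /pti /pt -{1}(encpK p) genEqCE => -> /=.
  by rewrite -!unitCE !encK.
exists (decp c); rewrite /represents /pti /pt genEqCE H /=.
by rewrite !unitCE.
Qed.

Lemma pti_eq i j : (i < 35)%N -> (j < 35)%N -> (pti i == pti j) = (i == j).
Proof.
move=> Hi Hj; apply/eqP/eqP => [E|->] //.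
have HiI : i \in I by rewrite memI.
have HjI : j \in I by rewrite memI.
move: (allP (allP check6_ok i HiI) j HjI); rewrite -genEqCE.
by rewrite /pti /pt in E; rewrite E eqxx implyTb => /eqP.
Qed.

Definition Kp (z : R * R) : bool := ((dec EC * z.1, dec EC * z.2) == z) && (z != (0, 0)).
Lemma KpE c : Kp (decp c) = KC c.
Proof.
rewrite /Kp /KC.
have -> : (dec EC * (decp c).1, dec EC * (decp c).2) = decp (mulC EC c.1, mulC EC c.2).
  by rewrite /decp !decM.
have -> : ((0 : R), (0 : R)) = decp zCC by rewrite /decp /= dec0.
by rewrite !(inj_eq decp_inj).
Qed.
Definition TX (X : {set R * R}) := [set z in X | Kp z].

Lemma T3 i : (i < 35)%N -> (3 <= #|TX (pti i)|)%N.
Proof.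
move=> Hi.
have sub : [set decp c | c in TL (Li i)] \subset TX (pti i).
  apply/subsetP => z /imsetP [c Hc ->]; rewrite inE.
  move: Hc; rewrite mem_filter => /andP [/andP [Hm Hk] _].
  by rewrite /pti /pt memCE Hm KpE Hk.
apply: leq_trans (subset_leq_card sub).
rewrite gcard_all; last by move=> x y _ _; apply: decp_inj.
  by case/andP: checkK_ok => /allP /(_ i); rewrite memI => /(_ Hi).
by apply: filter_uniq; case/and4P: check5_ok.
Qed.

Lemma Kcard : (#|[set z : R * R | Kp z]| <= 15)%N.
Proof.
have sub : [set z : R * R | Kp z] \subset [set decp c | c in filter KC allCC].
  apply/subsetP => z; rewrite inE => Hz; apply/imsetP; exists (encp z); last by rewrite encpK.
  by rewrite mem_filter -KpE encpK Hz allCC_all.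
apply: leq_trans (subset_leq_card sub) _.
rewrite gcard_all; last by move=> x y _ _; apply: decp_inj.
  by case/andP: checkK_ok => _ /eqP ->.
by apply: filter_uniq; case/and4P: check5_ok.
Qed.

Lemma bound (S : {set {set R * R}}) :
  S \subset [set pt l | l in L] -> pairwise_distant S -> (#|S| <= 5)%N.
Proof.
move=> sub pd.
have disj X Y z : X \in S -> Y \in S -> X != Y -> z \in TX X -> z \in TX Y -> False.
  move=> HX HY Hne; rewrite !inE => /andP [zX Kz] /andP [zY _].
  move/forall_inP: pd => /(_ X HX) /forall_inP /(_ Y HY) /implyP /(_ Hne) Hd.
  by move: Kz; rewrite /Kp (distant_inter Hd zX zY) eqxx andbF.
have H3 : (3 * #|S| <= 3 * 5)%N.
  apply: (@leq_trans (\sum_(X in S) #|TX X|)).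
    rewrite mulnC -sum_nat_const; apply: leq_sum => X HX.
    by have := subsetP sub X HX => /PI [i Hi ->]; exact: T3.
  apply: (@leq_trans #|[set z : R * R | Kp z]|); last exact: Kcard.
  rewrite (eq_bigr (fun X => \sum_z (if z \in TX X then 1 else 0)%N)); last first.
    by move=> X _; rewrite -big_mkcond sum1_card.
  rewrite exchange_big /= -sum1_card big_mkcond /=.
  rewrite [X in (_ <= X)%N]big_mkcond /=; apply: leq_sum => z _.
  case: (boolP (Kp z)) => Kz.
    rewrite inE Kz -big_mkcondr sum1dep_card.
    apply/card_le1_eqP => X Y; rewrite !inE => /andP [HX zX] /andP [HY zY].
    case: (eqVneq Y X) => // Hne; exfalso; apply: (disj X Y z HX HY); rewrite 1?eq_sym ?inE //.
  rewrite inE (negbTE Kz) big1 // => X _.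
  by rewrite inE (negbTE Kz) andbF.
by rewrite leq_pmul2l in H3.
Qed.


Theorem mainTheorem1 :
  let R := 'M['F_2]_2 in
  let P := projLine R in
  (* (i) *)
  #|P| = 35%N /\
  (* (ii) *)
  #|[set X in P | [exists p : R * R,
        represents p X && ((p.1 \is a GRing.unit) || (p.2 \is a GRing.unit))]]| = 26%N /\
  (* (iii) *)
  (forall X, X \in P -> #|[set Y in P | (Y != X) && neighbour X Y]| = 18%N) /\
  (* (iv) *)
  (forall X Y, X \in P -> Y \in P -> distant X Y ->
     #|[set Z in P | neighbour Z X && neighbour Z Y]| = 9%N) /\
  (* (v) *)
  (forall X Y Z, X \in P -> Y \in P -> Z \in P ->
     distant X Y -> distant X Z -> distant Y Z ->
     #|[set W in P | [&& neighbour W X, neighbour W Y & neighbour W Z]]| = 3%N) /\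
  (* (vi) *)
  (exists S : {set {set R * R}}, S \subset P /\ pairwise_distant S /\ #|S| = 5%N) /\
  (forall S : {set {set R * R}}, S \subset P -> pairwise_distant S -> (#|S| <= 5)%N).
Proof.
cbv zeta; rewrite PLeq.
split; first by rewrite (gcard_all uniqL pt_inj) sizeL.
split.
  by rewrite card_count (eq_count unit_part); apply/eqP; exact: checkii_ok.
split.
  move=> X /PI [i Hi ->]; rewrite card_count.
  rewrite (@eq_in_count _ _ (fun j => (j != i) && ~~ D i j)); last first.
    by move=> j; rewrite memI => Hj; rewrite /neighbour distCE // pti_eq.
  by apply/eqP; apply: (allP checkiii_ok); rewrite memI.
split.
  move=> X Y /PI [i Hi ->] /PI [j Hj ->]; rewrite distCE // => Dij.
  rewrite card_count.
  rewrite (@eq_in_count _ _ (fun k => ~~ D k i && ~~ D k j)); last first.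
    by move=> k; rewrite memI => Hk; rewrite /neighbour !distCE.
  have := allP (allP checkiv_ok i _) j _; rewrite !memI Dij => /(_ Hi Hj) /eqP.
  by [].
split.
  move=> X Y Z /PI [i Hi ->] /PI [j Hj ->] /PI [k Hk ->].
  rewrite !distCE // => Dij Dik Djk.
  rewrite card_count.
  rewrite (@eq_in_count _ _ (fun l => [&& ~~ D l i, ~~ D l j & ~~ D l k])); last first.
    by move=> l; rewrite memI => Hl; rewrite /neighbour !distCE.
  have := allP (allP checkv_ok i _) j _; rewrite !memI Dij => /(_ Hi Hj).
  by move=> /allP /(_ k); rewrite memI Dik Djk => /(_ Hk) /eqP.
split; last exact: bound.
case/and4P: checkvi_ok => /allP Hlt Hu /eqP Hs /allP Hd.
have Hinj : {in Snat &, injective Li}.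
  move=> a b Ha Hb E; apply/eqP; rewrite -pti_eq ?Hlt //.
  by rewrite /pti E.
exists [set pt l | l in map Li Snat]; split.
  apply/subsetP => X /imsetP [l /mapP [k Hk ->] ->].
  by apply/imsetP; exists (Li k) => //; apply: LiL; apply: Hlt.
split.
  apply/forall_inP => X /imsetP [l /mapP [a Ha ->] ->].
  apply/forall_inP => Y /imsetP [l' /mapP [b Hb ->] ->].
  apply/implyP => Hne; rewrite -/(pti a) -/(pti b) distCE ?Hlt //.
  have Hab : a != b by apply: contra Hne => /eqP ->.
  by have := allP (Hd a Ha) b Hb; rewrite Hab.
have Hu' : uniq (map Li Snat) by rewrite (map_inj_in_uniq Hinj).
have Hi' : {in map Li Snat &, injective pt}.
  move=> x y /mapP [a Ha ->] /mapP [b Hb ->].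
  by apply: pt_inj; apply: LiL; apply: Hlt.
by rewrite (gcard_all Hu' Hi') size_map Hs.
Qed.
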